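(* Every rooted duplication tree $T$ with $n$ leaves admits a unique finite sequence of duplication events $(B_1,B_2,\dots,B_k)$ with $B_1\preceq B_2\preceq\cdots\preceq B_k$ such that applying $B_1,\dots,B_k$ in this order to the single root gene produces $T$ (with its leaf order).
   Context: A duplication event on a current ordered array of genes $(g_1,\dots,g_m)$ is specified by a contiguous set of indices $B=\{i,i+1,\dots,i+\ell-1\}$ with $1\le i\le i+\ell-1\le m$; applying it gives each $g_j$, $j\in B$, two new children $\mathrm{lc}(g_j),\mathrm{rc}(g_j)$ and replaces $g_i,\dots,g_{i+\ell-1}$ by $\mathrm{lc}(g_i),\dots,\mathrm{lc}(g_{i+\ell-1}),\mathrm{rc}(g_i),\dots,\mathrm{rc}(g_{i+\ell-1})$. A rooted duplication tree is a rooted binary tree with ordered leaves arising from a single root gene by a finite sequence of such events (internal nodes = duplicated genes, leaves = final genes in order). For index sets $B_1,B_2$ write $B_1\prec B_2$ iff $\max B_1<\min B_2$, and $B_1\preceq B_2$ iff not $B_2\prec B_1$ (i.e. $\min B_1\le \max B_2$). *)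

(* Defs.v *)
From mathcomp Require Import all_boot.
Set Implicit Arguments.
Unset Strict Implicit.
Unset Printing Implicit Defensive.

(* A gene is identified by its address in the duplication tree: the path
   from the root gene, [false] meaning "left child lc" and [true] meaning
   "right child rc".  The root gene is [::]. *)
Definition gene := seq bool.
Definition lc (g : gene) : gene := rcons g false.
Definition rc (g : gene) : gene := rcons g true.

Definition root_array : seq gene := [:: [::]].

(* A duplication event B = {i, ..., j} (contiguous, 1-based indices) is
   represented by the pair (min B, max B) = (i, j). *)
Definition event := (nat * nat)%type.
Definition ev_min (B : event) : nat := B.1.
Definition ev_max (B : event) : nat := B.2.

Definition valid_event (m : nat) (B : event) : bool :=
  [&& 1 <= ev_min B, ev_min B <= ev_max B & ev_max B <= m].

(* Apply B = {i..j}: replace g_i..g_j by lc g_i .. lc g_j, rc g_i .. rc g_j. *)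
Definition apply_event (s : seq gene) (B : event) : seq gene :=
  let pre := take (ev_min B).-1 s in
  let blk := take (ev_max B - (ev_min B).-1) (drop (ev_min B).-1 s) in
  let suf := drop (ev_max B) s in
  pre ++ map lc blk ++ map rc blk ++ suf.

Fixpoint valid_events (s : seq gene) (Bs : seq event) : bool :=
  match Bs with
  | [::] => true
  | B :: Bs' => valid_event (size s) B && valid_events (apply_event s B) Bs'
  end.

Fixpoint apply_events (s : seq gene) (Bs : seq event) : seq gene :=
  match Bs with
  | [::] => s
  | B :: Bs' => apply_events (apply_event s B) Bs'
  end.

(* Bs, applied in order to the single root gene, produces the tree T
   (given by its ordered leaf array; internal nodes = proper prefixes). *)
Definition produces (Bs : seq event) (T : seq gene) : Prop :=
  valid_events root_array Bs /\ apply_events root_array Bs = T.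

Definition dup_tree (T : seq gene) : Prop := exists Bs, produces Bs T.

Definition ev_prec (B1 B2 : event) : bool := ev_max B1 < ev_min B2.
Definition ev_preceq (B1 B2 : event) : bool := ~~ ev_prec B2 B1.

(* Main.v *)
Require Import Defs.
From mathcomp Require Import all_boot zify.
Set Implicit Arguments.
Unset Strict Implicit.
Unset Printing Implicit Defensive.

Definition ev_at (P X : seq gene) : event := (size P + 1, size P + size X).

Lemma apply_at (P X S : seq gene) :
  apply_event (P ++ X ++ S) (ev_at P X) = P ++ map lc X ++ map rc X ++ S.
Proof.
rewrite /apply_event /ev_at /ev_min /ev_max /= addn1 /=.
rewrite take_size_cat // drop_size_cat // addKn take_size_cat //.
by rewrite [P ++ X ++ S]catA drop_size_cat ?size_cat.
Qed.

Lemma valid_at (P X S : seq gene) : 0 < size X -> valid_event (size (P ++ X ++ S)) (ev_at P X).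
Proof.
case: X => // x X _; rewrite /valid_event /ev_at /ev_min /ev_max /= !size_cat /=.
apply/and3P; split; rewrite ?size_cat ?addn1 // ?leq_add2l ?ltnS ?leq_addr //.
by rewrite addnS ltnS leq_addr.
Qed.

Lemma decomp (u : seq gene) B : valid_event (size u) B ->
  exists P X S : seq gene, [/\ u = P ++ X ++ S, 0 < size X & B = ev_at P X].
Proof.
case: B => i j; rewrite /valid_event /ev_min /ev_max /= => /and3P [h1 h2 h3].
exists (take i.-1 u), (take (j - i.-1) (drop i.-1 u)), (drop j u).
have hi : i.-1 <= size u by lia.
have s1 : size (take i.-1 u) = i.-1 by rewrite size_takel.
have s2 : size (take (j - i.-1) (drop i.-1 u)) = j - i.-1.
  by rewrite size_takel // size_drop leq_sub2r.
split.
- rewrite -{1}(cat_take_drop i.-1 u); congr (_ ++ _).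
  rewrite -{1}(cat_take_drop (j - i.-1) (drop i.-1 u)) drop_drop subnK //.
  lia.
- rewrite s2; lia.
- rewrite /ev_at s1 s2; congr pair; lia.
Qed.

Lemma apply_events_rcons s Bs B :
  apply_events s (rcons Bs B) = apply_event (apply_events s Bs) B.
Proof. by elim: Bs s => //= C Bs IH s; exact: IH. Qed.

Lemma valid_events_rcons s Bs B : valid_events s (rcons Bs B) =
  valid_events s Bs && valid_event (size (apply_events s Bs)) B.
Proof.
elim: Bs s => [|C Bs IH] s /=; first by rewrite andbT.
by rewrite IH andbA.
Qed.

Definition d0 : event := (0, 0).
Definition lastmin (Cs : seq event) : nat := ev_min (last d0 Cs).

Lemma preceqE a b : ev_preceq a b = (ev_min a <= ev_max b).
Proof. by rewrite /ev_preceq /ev_prec -leqNgt. Qed.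

Lemma sorted_rcons' (Cs : seq event) C : sorted ev_preceq (rcons Cs C) =
  sorted ev_preceq Cs && (lastmin Cs <= ev_max C).
Proof.
rewrite /lastmin -preceqE.
by case: Cs => [|y s] //=; rewrite rcons_path.
Qed.

Lemma cat_split (T : Type) (A B C D : seq T) : A ++ B = C ++ D -> size A <= size C ->
  exists M, C = A ++ M /\ B = M ++ D.
Proof.
elim: A C => [|a A IH] C /=; first by move=> ->; exists C.
case: C => [|c C] //= [-> e]; rewrite ltnS => /(IH _ e) [M [-> ->]].
by exists M.
Qed.

Definition len (B : event) := ev_max B - (ev_min B).-1.

Lemma len_at P X : len (ev_at P X) = size X.
Proof. by rewrite /len /ev_at /ev_min /ev_max /= addn1 /= addKn. Qed.

Lemma insert (Cs : seq event) (B : event) :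
  valid_events root_array Cs -> sorted ev_preceq Cs ->
  valid_event (size (apply_events root_array Cs)) B ->
  exists Cs2, [/\ valid_events root_array Cs2,
    apply_events root_array Cs2 = apply_event (apply_events root_array Cs) B,
    sorted ev_preceq Cs2 & lastmin Cs2 <= maxn (lastmin Cs + len B) (ev_max B)].
Proof.
elim/last_ind: Cs B => [|Cs C IH] B.
  move=> _ _ hB; exists [:: B]; rewrite /= hB; split => //.
  move: hB; rewrite /valid_event /lastmin /= => /and3P [_ h _]; lia.
rewrite valid_events_rcons sorted_rcons' apply_events_rcons.
move=> /andP [vCs vC] /andP [sCs sC].
have [P [X [S [eT hX eC]]]] := decomp vC.
subst C.
have lC : lastmin (rcons Cs (ev_at P X)) = size P + 1 by rewrite /lastmin last_rcons.
rewrite lC eT apply_at => vB.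
case: (leqP (size P + 1) (ev_max B)) => hPB.
  exists (rcons (rcons Cs (ev_at P X)) B).
  have eTC : apply_events root_array (rcons Cs (ev_at P X)) = P ++ map lc X ++ map rc X ++ S.
    by rewrite apply_events_rcons eT apply_at.
  rewrite !valid_events_rcons !apply_events_rcons vCs vC eT apply_at vB.
  rewrite sorted_rcons' sorted_rcons' sCs sC lC hPB /lastmin last_rcons.
  split => //. move: vB; rewrite /valid_event => /and3P [_ h _]; lia.
have [Q [Y [R [eT2 hY eB]]]] := decomp vB.
subst B; move: hPB; rewrite /ev_at /ev_max /= => hPB.
rewrite len_at.
have [M [eP eR]] : exists M, P = (Q ++ Y) ++ M /\ R = M ++ (map lc X ++ map rc X ++ S).
  apply: cat_split; first by rewrite -catA -eT2.
  rewrite size_cat; lia.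
have hv : valid_event (size (apply_events root_array Cs)) (ev_at Q Y).
  rewrite eT eP -!catA; exact: valid_at.
have [Cs3 [v3 a3 s3 l3]] := IH (ev_at Q Y) vCs sCs hv.
rewrite len_at in l3.
have eA3 : apply_events root_array Cs3 = (Q ++ map lc Y ++ map rc Y ++ M) ++ X ++ S.
  by rewrite a3 eT eP -!catA apply_at.
exists (rcons Cs3 (ev_at (Q ++ map lc Y ++ map rc Y ++ M) X)).
rewrite valid_events_rcons apply_events_rcons sorted_rcons' v3 s3 eA3 apply_at.
split => //.
- exact: valid_at.
- by rewrite eT2 eR apply_at -!catA.
- move: l3 sC; rewrite /ev_at /ev_max /ev_min /= eP !size_cat !size_map; lia.
- rewrite /lastmin last_rcons /ev_at /ev_min /ev_max /= eP !size_cat !size_map; lia.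
Qed.

Lemma exists_sorted Bs : valid_events root_array Bs -> exists Cs,
  [/\ valid_events root_array Cs, apply_events root_array Cs = apply_events root_array Bs
    & sorted ev_preceq Cs].
Proof.
elim/last_ind: Bs => [|Bs B IH]; first by exists [::].
rewrite valid_events_rcons apply_events_rcons => /andP [vBs vB].
have [Cs [vC aC sC]] := IH vBs.
rewrite -aC in vB *.
have [Cs2 [v2 a2 s2 _]] := insert vC sC vB.
by exists Cs2.
Qed.

Definition incmp (x y : gene) := ~~ prefix x y && ~~ prefix y x.

Lemma incmp_sym x y : incmp x y = incmp y x.
Proof. by rewrite /incmp andbC. Qed.

Lemma prefix_rcons_inv (y x : gene) b : prefix y (rcons x b) -> (y = rcons x b) \/ prefix y x.
Proof.
case/prefixP => s3; case/lastP: s3 => [|s3 c]; first by rewrite cats0; left.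
rewrite -rcons_cat => /rcons_inj [-> _]; right; exact: prefix_prefix.
Qed.

Lemma incmp_rcons x y b : incmp x y -> incmp (rcons x b) y.
Proof.
case/andP => h1 h2; apply/andP; split; apply/negP.
- move=> h; case/negP: h1; exact: prefix_trans (prefix_rcons x b) h.
- case/prefix_rcons_inv => [e|h]; last by case/negP: h2.
  by case/negP: h1; rewrite e prefix_rcons.
Qed.

Lemma incmp_rcons2 x y b c : incmp x y -> incmp (rcons x b) (rcons y c).
Proof. move=> h; apply: incmp_rcons; rewrite incmp_sym; apply: incmp_rcons; by rewrite incmp_sym. Qed.

Lemma prefix_eqsize (x y : gene) : prefix x y -> size x = size y -> x = y.
Proof. by rewrite prefixE => /eqP h e; rewrite -h e take_size. Qed.

Lemma incmp_lr x : incmp (lc x) (rc x).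
Proof.
apply/andP; split; apply/negP => h; have := prefix_eqsize h;
  rewrite /lc /rc !size_rcons => /(_ erefl) /rcons_inj [] //.
Qed.

Lemma sub_pw (r r' : rel gene) xs : (forall x y, r x y -> r' x y) ->
  pairwise r xs -> pairwise r' xs.
Proof.
move=> H; elim: xs => //= x xs IH /andP [h1 h2]; rewrite IH // andbT.
by apply: sub_all h1 => y; apply: H.
Qed.

Lemma pw_lr X : pairwise incmp X -> allrel incmp (map lc X) (map rc X).
Proof.
elim: X => //= x X IH /andP [h1 h2].
rewrite allrel_consl allrel_consr /= incmp_lr /= IH // andbT.
rewrite !all_map; apply/andP; split; apply: sub_all h1 => y /= h.
- exact: incmp_rcons2.
- rewrite incmp_sym; exact: incmp_rcons2.
Qed.


Unset Implicit Arguments.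
Set Strict Implicit.
Lemma inv_step P X S : pairwise incmp (P ++ X ++ S) ->
  pairwise incmp (P ++ map lc X ++ map rc X ++ S).
Proof.
rewrite !pairwise_cat !allrel_catr !pairwise_map !allrel_mapl !allrel_mapr.
case/and5P => /andP [hPX hPS] hP hXS hX hS.
have A1 : forall b, allrel (fun x y => incmp x (rcons y b)) P X.
  move=> b; apply: sub_allrel hPX => x y h.
  rewrite incmp_sym; apply: incmp_rcons; by rewrite incmp_sym.
have A2 : forall b, allrel (fun x y => incmp (rcons x b) y) X S.
  by move=> b; apply: sub_allrel hXS => x y h; apply: incmp_rcons.
have A3 : forall b, pairwise (relpre (rcons^~ b) incmp) X.
  by move=> b; apply: sub_pw hX => x y h; apply: incmp_rcons2.
have A4 := pw_lr hX; rewrite allrel_mapl allrel_mapr in A4.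
repeat (apply/andP; split) => //; [exact: A1 | exact: A1 | exact: A2 | exact: A3 | exact: A2 | exact: A3].
Qed.

Lemma incmp_irr : irreflexive incmp.
Proof. by move=> x; rewrite /incmp prefix_refl. Qed.

Lemma reach_inv Bs : valid_events root_array Bs ->
  pairwise incmp (apply_events root_array Bs).
Proof.
elim/last_ind: Bs => [|Bs B IH] //.
rewrite valid_events_rcons apply_events_rcons => /andP [vBs vB].
have [P [X [S [eT hX ->]]]] := decomp vB.
rewrite eT apply_at; apply: inv_step; rewrite -eT; exact: IH.
Qed.

Lemma nth_lc (A W R : seq gene) r : r < size W ->
  nth [::] (A ++ map lc W ++ map rc W ++ R) (size A + r) = lc (nth [::] W r).
Proof.
move=> hr; rewrite nth_cat ltnNge leq_addr /= addKn nth_cat size_map hr.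
by rewrite (nth_map [::]).
Qed.

Lemma nth_rc (A W R : seq gene) r : r < size W ->
  nth [::] (A ++ map lc W ++ map rc W ++ R) (size A + size W + r) = rc (nth [::] W r).
Proof.
move=> hr; rewrite nth_cat ltnNge -addnA leq_addr /= addKn nth_cat size_map.
rewrite ltnNge leq_addr /= addKn nth_cat size_map hr.
by rewrite (nth_map [::]).
Qed.

Lemma lc_neq_rc x y : lc x <> rc y.
Proof. by move/rcons_inj => []. Qed.

Set Implicit Arguments.
Unset Strict Implicit.

Lemma last_max Bs : valid_events root_array Bs -> sorted ev_preceq Bs ->
  forall P Y S : seq gene, apply_events root_array Bs = P ++ map lc Y ++ map rc Y ++ S ->
  0 < size Y -> size P + 1 <= lastmin Bs.
Proof.
elim/last_ind: Bs => [|Bs B IH].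
  move=> _ _ P Y S /= /(congr1 size); rewrite !size_cat !size_map /=; lia.
move=> vall sall; have uT := pairwise_uniq incmp_irr (reach_inv _ vall).
move: vall sall uT.
rewrite valid_events_rcons sorted_rcons' apply_events_rcons => /andP [vBs vB] /andP [sBs sB].
have [P0 [X [S0 [eT hX eB]]]] := decomp vB; subst B.
rewrite eT apply_at /lastmin last_rcons /ev_at /ev_min /= => uT P Y S E hY.
move: sB; rewrite /ev_at /ev_max /= => sB.
case: (leqP (size P) (size P0)) => hlt; first by rewrite leq_add2r.
exfalso.
case: (leqP (size P0 + 2 * size X) (size P)) => hA.
  have [M [eP eS0]] : exists M, P = (P0 ++ map lc X ++ map rc X) ++ M /\
      S0 = M ++ (map lc Y ++ map rc Y ++ S).
    apply: cat_split; first by rewrite -!catA.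
    by rewrite !size_cat !size_map; lia.
  have := IH vBs sBs (P0 ++ X ++ M) Y S.
  rewrite eT eS0 -!catA => /(_ erefl hY).
  move: hA; rewrite eP !size_cat !size_map; lia.
have y0 := nth_lc P Y S _ hY; rewrite addn0 -E in y0.
have y0' := nth_rc P Y S _ hY; rewrite addn0 -E in y0'.
case: (leqP (size P0 + size X) (size P)) => hB1.
  have hr : size P - (size P0 + size X) < size X by lia.
  have := nth_rc P0 X S0 _ hr.
  rewrite (_ : size P0 + size X + (size P - (size P0 + size X)) = size P); last by lia.
  by rewrite y0 => /lc_neq_rc.
case: (leqP (size P - size P0 + size Y) (size X)) => hC; last first.
  have hr : size X - (size P - size P0) < size Y by lia.
  have := nth_lc P Y S _ hr; rewrite -E.
  rewrite (_ : size P + (size X - (size P - size P0)) = size P0 + size X + 0); last by lia.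
  by rewrite nth_rc // => /esym /lc_neq_rc.
case: (ltnP (size P - size P0 + size Y) (size X)) => hD.
  have := nth_lc P0 X S0 _ hD.
  rewrite (_ : size P0 + (size P - size P0 + size Y) = size P + size Y); last by lia.
  by rewrite y0' => /esym /lc_neq_rc.
have hk : size P - size P0 < size X by lia.
have x0 := nth_rc P0 X S0 _ hX.
rewrite (_ : size P0 + size X + 0 = size P + size Y) in x0; last by lia.
rewrite y0' in x0; move/rcons_inj: x0 => [e0].
have xk := nth_lc P0 X S0 _ hk.
rewrite (_ : size P0 + (size P - size P0) = size P) in xk; last by lia.
rewrite y0 in xk; move/rcons_inj: xk => [ek].
have x00 := nth_lc P0 X S0 _ hX; rewrite addn0 in x00.
have : nth [::] (P0 ++ map lc X ++ map rc X ++ S0) (size P0) ==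
       nth [::] (P0 ++ map lc X ++ map rc X ++ S0) (size P).
  by rewrite x00 y0 -e0.
have hs1 : size P0 < size (P0 ++ map lc X ++ map rc X ++ S0).
  rewrite !size_cat !size_map; lia.
have hs2 : size P < size (P0 ++ map lc X ++ map rc X ++ S0).
  rewrite !size_cat !size_map; lia.
rewrite nth_uniq // => /eqP e; by move: hlt; rewrite e ltnn.
Qed.

Lemma cat_eq_size (A B C D : seq gene) : A ++ B = C ++ D -> size A = size C -> A = C /\ B = D.
Proof.
move=> e hs; have [M [eC eB]] := cat_split e (eq_leq hs).
move: hs; rewrite eC size_cat -{1}(addn0 (size A)) => /eqP; rewrite eqn_add2l eq_sym size_eq0 => /eqP hM.
by move: eC eB; rewrite hM cats0.
Qed.

Lemma block_unique (P1 X1 S1 P2 X2 S2 : seq gene) : size P1 = size P2 ->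
  0 < size X1 -> 0 < size X2 ->
  P1 ++ map lc X1 ++ map rc X1 ++ S1 = P2 ++ map lc X2 ++ map rc X2 ++ S2 ->
  [/\ P1 = P2, X1 = X2 & S1 = S2].
Proof.
move=> hP h1 h2 e.
have [eP e'] := cat_eq_size e hP.
have hX : size X1 = size X2.
  have key : forall (Xa Sa Xb Sb : seq gene), 0 < size Xa -> size Xa < size Xb ->
      map lc Xa ++ map rc Xa ++ Sa <> map lc Xb ++ map rc Xb ++ Sb.
    move=> Xa Sa Xb Sb ha hab ee.
    have := nth_rc [::] Xa Sa _ ha; rewrite ee /= addn0.
    by rewrite (nth_lc [::] Xb Sb _ hab) => /lc_neq_rc.
  case: (ltngtP (size X1) (size X2)) => // hlt.
  - by case: (key _ S1 _ S2 h1 hlt).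
  - by case: (key _ S2 _ S1 h2 hlt).
have hm1 : size (map lc X1) = size (map lc X2) by rewrite !size_map.
have [el eS] := cat_eq_size e' hm1.
have hm2 : size (map rc X1) = size (map rc X2) by rewrite !size_map.
have [_ eS'] := cat_eq_size eS hm2.
split => //; exact: (inj_map (@rcons_injl bool false)) el.
Qed.

Lemma size_grow (u : seq gene) B : valid_event (size u) B -> 1 < size (apply_event u B).
Proof.
move=> vB; have [P [X [S [-> hX ->]]]] := decomp vB.
rewrite apply_at !size_cat !size_map; lia.
Qed.

Lemma uniq_sorted Bs Cs : valid_events root_array Bs -> valid_events root_array Cs ->
  sorted ev_preceq Bs -> sorted ev_preceq Cs ->
  apply_events root_array Bs = apply_events root_array Cs -> Bs = Cs.
Proof.
elim/last_ind: Bs Cs => [|Bs B IH] Cs.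
  case/lastP: Cs => [|Cs C] // _; rewrite valid_events_rcons apply_events_rcons.
  by case/andP => _ /size_grow h _ _ e; rewrite /= -e in h.
case/lastP: Cs => [|Cs C].
  rewrite valid_events_rcons apply_events_rcons => /andP [_ /size_grow h] _ _ _ e.
  by rewrite e in h.
rewrite !valid_events_rcons !sorted_rcons' !apply_events_rcons.
move=> /andP [vBs vB] /andP [vCs vC] /andP [sBs sB0] /andP [sCs sC0].
have [P1 [X1 [S1 [e1 h1 eB]]]] := decomp vB.
have [P2 [X2 [S2 [e2 h2 eC]]]] := decomp vC.
subst B C; rewrite e1 e2 !apply_at => E.
have vB' : valid_events root_array (rcons Bs (ev_at P1 X1)) by rewrite valid_events_rcons vBs vB.
have vC' : valid_events root_array (rcons Cs (ev_at P2 X2)) by rewrite valid_events_rcons vCs vC.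
have sB' : sorted ev_preceq (rcons Bs (ev_at P1 X1)) by rewrite sorted_rcons' sBs.
have sC' : sorted ev_preceq (rcons Cs (ev_at P2 X2)) by rewrite sorted_rcons' sCs.
have l1 : size P2 + 1 <= lastmin (rcons Bs (ev_at P1 X1)).
  apply: (last_max vB' sB' (S := S2)) h2; by rewrite apply_events_rcons e1 apply_at E.
have l2 : size P1 + 1 <= lastmin (rcons Cs (ev_at P2 X2)).
  apply: (last_max vC' sC' (S := S1)) h1; by rewrite apply_events_rcons e2 apply_at E.
move: l1 l2; rewrite /lastmin !last_rcons /ev_at /ev_min /= => l1 l2.
have hP : size P1 = size P2 by apply/eqP; rewrite eqn_leq -(leq_add2r 1) l2 -(leq_add2r 1) l1.
have [eP eX eS] := block_unique hP h1 h2 E.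
subst P2 X2 S2.
by rewrite (IH Cs vBs vCs sBs sCs) // e1 e2.
Qed.

Unset Implicit Arguments.
Set Strict Implicit.

Theorem lemma3p3 (n : nat) (T : seq gene) :
  dup_tree T -> size T = n ->
  exists! Bs : seq event, sorted ev_preceq Bs /\ produces Bs T.
Proof.
move=> [Bs [vB aB]] _.
have [Cs [vC aC sC]] := exists_sorted vB.
exists Cs; split; first by split => //; split => //; rewrite aC.
move=> Ds [sD [vD aD]]; apply: uniq_sorted => //.
by rewrite aC aB aD.
Qed.
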